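(* Let $t>0$. For all $n_1,\dots,n_k\ge0$, as polynomials in $x$, $$\prod_{j=1}^kU_{n_j}(x,t)=\sum_{\substack{\pi\in NC_{1,2}(n_1,\dots,n_k)\\ si(\pi)=0}}t^{s_2(\pi)}\,U_{s(\pi)}(x,t),$$ and consequently, with $n=\sum n_j$, $$\prod_{j=1}^kU_{n_j}(x,t)=\sum_{m=0}^nt^{(n-m)/2}\,|NC_2(n_1,\dots,n_k,m)|\,U_m(x,t).$$
   Context: The polynomials $U_m(x,t)$ (scaled Chebyshev polynomials of the second kind) are defined by $U_0=1$, $U_{-1}=0$, $xU_m(x,t)=U_{m+1}(x,t)+tU_{m-1}(x,t)$. For $n_1,\dots,n_r\ge0$ with sum $N$, $\mathcal P(n_1,\dots,n_r)$ is the set of partitions of $\{1,\dots,N\}$ no class of which contains two elements of the same consecutive interval when $\{1,\dots,N\}$ is split into consecutive intervals of lengths $n_1,\dots,n_r$. A partition is noncrossing if there are no $i<j<k<l$ with $i\sim k$, $j\sim l$, $i\not\sim j$. $NC_{1,2}(n_1,\dots,n_r)$ (resp. $NC_2(n_1,\dots,n_r)$) is the set of noncrossing $\pi\in\mathcal P(n_1,\dots,n_r)$ all of whose classes have one or two (resp. exactly two) elements. $s(\pi)$ is the number of one-element classes, $s_2(\pi)$ the number of two-element classes. A class $B$ of $\pi$ is inner if there is another class $C$ and $a,b\in C$ with $a<\min B$ and $\max B<b$, outer otherwise; $si(\pi)$ is the number of inner one-element classes. *)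

(* Defs.v *)
From HB Require Import structures.
From mathcomp Require Import all_boot all_order all_algebra.
Set Implicit Arguments. Unset Strict Implicit. Unset Printing Implicit Defensive.
Import Order.TTheory GRing.Theory Num.Theory.
Local Open Scope ring_scope.

(* Scaled Chebyshev polynomials of the second kind, as polynomials in x:
   U_0 = 1, U_1 = x, U_{m+2} = x U_{m+1} - t U_m. *)
Fixpoint Upair (R : nzRingType) (t : R) (m : nat) : {poly R} * {poly R} :=
  match m with
  | 0 => (1, 'X)
  | m'.+1 => let p := Upair t m' in (p.2, ('X * p.2 - t%:P * p.1)%R)
  end.
Definition Ucheb (R : nzRingType) (t : R) (m : nat) : {poly R} := (Upair t m).1.

(* The ground set {1..N} is represented by 'I_N = {0..N-1}. It is split into
   consecutive intervals of lengths ns`_0, ..., ns`_(k-1). *)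
Definition same_interval (ns : seq nat) (i j : nat) : bool :=
  [exists r : 'I_(size ns),
     [&& (sumn (take r ns) <= i < sumn (take r.+1 ns))%N
       & (sumn (take r ns) <= j < sumn (take r.+1 ns))%N]].

Definition prel (N : nat) (P : {set {set 'I_N}}) (i j : 'I_N) : bool :=
  [exists B in P, (i \in B) && (j \in B)].

Definition admissible (N : nat) (ns : seq nat) (P : {set {set 'I_N}}) : bool :=
  partition P [set: 'I_N] &&
  [forall B in P, forall i in B, forall j in B,
     (i != j) ==> ~~ same_interval ns i j].

Definition noncrossing (N : nat) (P : {set {set 'I_N}}) : bool :=
  ~~ [exists i : 'I_N, exists j : 'I_N, exists k : 'I_N, exists l : 'I_N,
        [&& (i < j < k)%N, (k < l)%N, prel P i k, prel P j l & ~~ prel P i j]].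

Definition NC12 (N : nat) (ns : seq nat) (P : {set {set 'I_N}}) : bool :=
  [&& admissible ns P, noncrossing P &
      [forall B in P, (#|B| == 1%N) || (#|B| == 2%N)]].

Definition NC2 (N : nat) (ns : seq nat) (P : {set {set 'I_N}}) : bool :=
  [&& admissible ns P, noncrossing P & [forall B in P, #|B| == 2%N]].

Definition s1 (N : nat) (P : {set {set 'I_N}}) : nat := #|[set B in P | #|B| == 1%N]|.
Definition s2 (N : nat) (P : {set {set 'I_N}}) : nat := #|[set B in P | #|B| == 2%N]|.

Definition inner (N : nat) (P : {set {set 'I_N}}) (B : {set 'I_N}) : bool :=
  [exists C in P, (C != B) &&
     [exists a in C, exists b in C, [forall x in B, (a < x < b)%N]]].

Definition si (N : nat) (P : {set {set 'I_N}}) : nat :=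
  #|[set B in P | (#|B| == 1%N) && inner P B]|.

(* Main.v *)
Require Import Defs.
From HB Require Import structures.
From mathcomp Require Import all_boot all_order all_algebra.
From mathcomp Require Import zify.
Import Order.TTheory GRing.Theory Num.Theory.
Set Implicit Arguments. Unset Strict Implicit. Unset Printing Implicit Defensive.


Lemma take_rcons_le (ns : seq nat) k r : r <= size ns -> take r (rcons ns k) = take r ns.
Proof.
move=> h; rewrite -cats1 take_cat; case: ltnP => // h2.
have -> : r = size ns by apply/eqP; rewrite eqn_leq h h2.
by rewrite subnn take0 cats0 take_size.
Qed.

Lemma sumn_take_le (ns : seq nat) r : sumn (take r ns) <= sumn ns.
Proof.
elim: ns r => [|a ns IH] [|r] //=.
by rewrite leq_add2l.
Qed.

Lemma SI ns k i j : i < sumn ns + k -> j < sumn ns + k ->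
  same_interval (rcons ns k) i j =
  if (i < sumn ns) && (j < sumn ns) then same_interval ns i j
  else (sumn ns <= i) && (sumn ns <= j).
Proof.
move=> hi hj; rewrite /same_interval.
apply/existsP/idP.
  case=> r /andP[/andP[a1 a2] /andP[b1 b2]].
  have rs : r < (size ns).+1 by rewrite -(size_rcons ns k) ltn_ord.
  case: (ltnP r (size ns)) => hr.
    rewrite !take_rcons_le ?(ltnW hr) // in a1 a2 b1 b2.
    have := sumn_take_le ns r.+1 => le.
    rewrite (leq_trans a2 le) (leq_trans b2 le) /=.
    by apply/existsP; exists (Ordinal hr); rewrite a1 a2 b1 b2.
  have er : val r = size ns by apply/eqP; rewrite eqn_leq hr -ltnS rs.
  rewrite er take_rcons_le // take_size in a1 b1.
  have -> : (i < sumn ns) = false by rewrite ltnNge a1.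
  by rewrite /= a1 b1.
have lt1 : size ns < size (rcons ns k) by rewrite size_rcons.
case: ifP => [/andP[iN jN] /existsP[r /andP[/andP[a1 a2] /andP[b1 b2]]]|_ /andP[iN jN]].
  have lt2 : r < size (rcons ns k) by rewrite size_rcons ltnS ltnW.
  exists (Ordinal lt2) => /=.
  by rewrite !take_rcons_le ?(ltn_ord r) ?(ltnW (ltn_ord r)) // a1 a2 b1 b2.
exists (Ordinal lt1) => /=.
rewrite take_rcons_le // take_size take_oversize ?size_rcons // sumn_rcons.
by rewrite iN jN hi hj.
Qed.

Section Gen.
Variable M : nat.
Implicit Types (P : {set {set 'I_M}}) (s : nat -> nat).

Definition pf P (i : nat) : nat :=
  if insub i is Some x then
    (if [pick y in pblock P x | y != x] is Some y then val y else i)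
  else i.

Definition blocks12 P := [forall B in P, (#|B| == 1%N) || (#|B| == 2%N)].
Definition goodP P := partition P [set: 'I_M] && blocks12 P.

Definition invn s := forall i, i < M -> s i < M /\ s (s i) = i.

Lemma pf_ge P i : M <= i -> pf P i = i.
Proof. by move=> hi; rewrite /pf insubF // ltnNge hi. Qed.

Lemma pfE P (x : 'I_M) :
  pf P x = if [pick y in pblock P x | y != x] is Some y then val y else x.
Proof. by rewrite /pf valK. Qed.

Lemma pblockE P (x y : 'I_M) : goodP P ->
  (y \in pblock P x) = (y == x) || (val y == pf P x).
Proof.
case/andP=> partP /forallP b12.
have xc : x \in cover P by case/and3P: partP => /eqP -> _ _; rewrite inE.
have Bx := pblock_mem xc.
have xB : x \in pblock P x by rewrite mem_pblock.
rewrite pfE; case: pickP => [z /andP[zB zx] | none].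
  have [->|yx] := eqVneq y x; first by rewrite xB.
  rewrite /=; apply/idP/idP => [yB|/eqP/val_inj ->//].
  apply/negPn/negP => yz.
  have := b12 _; move=> /(_ (pblock P x)); rewrite Bx /= => hc.
  have : #|x |: (y |: [set z])| <= #|pblock P x|.
    by apply: subset_leq_card; apply/subsetP => w; rewrite !inE => /orP[/eqP->|/orP[]/eqP->].
  rewrite !cardsU1 cards1 !inE (eq_sym x y) (eq_sym x z) (negPf yx) (negPf zx) yz /=.
  by case/orP: hc => /eqP ->.
have [->|yx] := eqVneq y x; first by rewrite xB.
rewrite /=; apply/idP/idP => [yB|/eqP/val_inj yxe]; last by rewrite yxe eqxx in yx.
by have := none y; rewrite yB yx.
Qed.

Lemma pf_lt P i : goodP P -> i < M -> pf P i < M.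
Proof.
move=> _ hi; have -> : i = val (Ordinal hi) by [].
by rewrite pfE; case: pickP => [z _|_] /=.
Qed.

Lemma pf_inv P : goodP P -> invn (pf P).
Proof.
move=> gP i hi; split; first exact: pf_lt.
pose x := Ordinal hi; pose y := Ordinal (pf_lt gP hi).
have yx : y \in pblock P x by rewrite pblockE ?gP // eqxx orbT.
have partP : partition P [set: 'I_M] by move: (gP) => /andP[].
have xc : forall z : 'I_M, z \in cover P.
  by move=> z; case/and3P: partP => /eqP -> _ _; rewrite inE.
have eqb : pblock P y = pblock P x.
  by apply: same_pblock => //; case/and3P: partP.
have : x \in pblock P y by rewrite eqb mem_pblock.
by rewrite pblockE // => /orP[/eqP/(congr1 val) /= h|/eqP /= h]; rewrite -?h -?h.
Qed.

Definition Rs s : rel 'I_M := fun x y => (y == x) || (val y == s x).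
Definition mkP s : {set {set 'I_M}} := equivalence_partition (Rs s) [set: 'I_M].

Lemma Rs_equiv s : invn s -> {in [set: 'I_M] & &, equivalence_rel (Rs s)}.
Proof.
move=> hs x y z _ _ _; split; first by rewrite /Rs eqxx.
rewrite /Rs => /orP[/eqP->//|/eqP hy].
have [_ hss] := hs x (ltn_ord x).
by rewrite -!val_eqE /= hy hss orbC.
Qed.

Lemma mkP_part s : invn s -> partition (mkP s) [set: 'I_M].
Proof. by move=> hs; apply: equivalence_partitionP; apply: Rs_equiv. Qed.

Lemma mkP_pblock s (x y : 'I_M) : invn s -> (y \in pblock (mkP s) x) = Rs s x y.
Proof. by move=> hs; rewrite (pblock_equivalence_partition (Rs_equiv hs)) ?inE. Qed.

Lemma mkP_blocks s : invn s -> blocks12 (mkP s).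
Proof.
move=> hs; apply/forallP => B; apply/implyP => /imsetP[x _ ->].
have [lt _] := hs x (ltn_ord x).
have [e|ne] := eqVneq (s x) x.
  have -> : [set y in [set: 'I_M] | Rs s x y] = [set x].
    apply/setP => y; rewrite !inE /Rs e; apply/orP/idP => [[//|/eqP/val_inj->//]|->]; by left.
  by rewrite cards1.
have -> : [set y in [set: 'I_M] | Rs s x y] = [set x; Ordinal lt].
  apply/setP => y; rewrite !inE /Rs; congr (_ || _); apply/eqP/eqP => [h|->//]; exact: val_inj.
rewrite cards2; case: (x =P Ordinal lt) => [/(congr1 val) /= h|//].
by rewrite -h eqxx in ne.
Qed.

Lemma goodP_mkP s : invn s -> goodP (mkP s).
Proof. by move=> hs; rewrite /goodP mkP_part // mkP_blocks. Qed.

Lemma pf_mkP s i : invn s -> i < M -> pf (mkP s) i = s i.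
Proof.
move=> hs hi; have -> : i = val (Ordinal hi) by [].
set x := Ordinal hi.
have [lt hss] := hs x (ltn_ord x).
rewrite pfE; case: pickP => [z|none].
  by rewrite mkP_pblock // /Rs => /andP[/orP[->//|/eqP ->] _].
have := none (Ordinal lt); rewrite mkP_pblock // /Rs /= eqxx orbT /= => /negbFE /eqP /(congr1 val) /= ->.
by [].
Qed.

Lemma mkP_ext s1 s2 : (forall i, i < M -> s1 i = s2 i) -> mkP s1 = mkP s2.
Proof.
move=> h; rewrite /mkP /equivalence_partition; apply: eq_imset => x.
by apply/setP => y; rewrite !inE /Rs h.
Qed.

Lemma mkP_pf P : goodP P -> mkP (pf P) = P.
Proof.
move=> gP; have partP : partition P [set: 'I_M] by case/andP: gP.
rewrite -{2}(equivalence_partition_pblock partP) /mkP /equivalence_partition.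
by apply: eq_imset => x; apply/setP => y; rewrite !inE pblockE.
Qed.


Lemma prelE P (i j : 'I_M) : goodP P -> prel P i j = (j == i) || (val j == pf P i).
Proof.
move=> gP; have partP : partition P [set: 'I_M] by move: (gP) => /andP[].
have tiP : trivIset P by case/and3P: partP.
have ic : i \in cover P by case/and3P: partP => /eqP -> _ _; rewrite inE.
rewrite -pblockE //; apply/existsP/idP => [[B /and3P[BP iB jB]]|jB].
  by rewrite (def_pblock tiP BP iB).
by exists (pblock P i); rewrite pblock_mem // mem_pblock ic.
Qed.

Lemma pblock_fix P (x : 'I_M) : goodP P -> pf P x = x -> pblock P x = [set x].
Proof.
move=> gP h; apply/setP => y; rewrite pblockE // h inE.
by case: (y =P x) => [->|ne] //=; apply/eqP => /val_inj.
Qed.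

Lemma fix_of_set1 P (x : 'I_M) : goodP P -> [set x] \in P -> pf P x = x.
Proof.
move=> gP xP; have partP : partition P [set: 'I_M] by move: (gP) => /andP[].
have tiP : trivIset P by case/and3P: partP.
have e : pblock P x = [set x] by apply: def_pblock; rewrite ?inE.
have := pf_lt gP (ltn_ord x); move=> lt.
have : Ordinal lt \in pblock P x by rewrite pblockE // eqxx orbT.
by rewrite e inE => /eqP /(congr1 val) /= ->.
Qed.

Definition fixc (s : nat -> nat) := (\sum_(i < M) (s i == i))%N.

Lemma card_setE (T : finType) (p : pred T) : #|[set x | p x]| = (\sum_(x : T) p x)%N.
Proof.
rewrite -sum1_card big_mkcond /=; apply: eq_bigr => x _; rewrite inE.
by case: (p x).
Qed.

Lemma s1E P : goodP P -> s1 P = fixc (pf P).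
Proof.
move=> gP; rewrite /s1 /fixc.
have -> : [set B in P | #|B| == 1%N] = [set [set x] | x in [set x : 'I_M | pf P x == x]].
  apply/setP => B; rewrite !inE; apply/andP/imsetP.
    case=> BP /cards1P [x Bx]; exists x => //; rewrite inE; apply/eqP.
    by apply: fix_of_set1 => //; rewrite -Bx.
  case=> x; rewrite inE => /eqP hx ->; split; last by rewrite cards1.
  rewrite -(pblock_fix gP hx); apply: pblock_mem.
  by move: (gP) => /andP[/and3P[/eqP -> _ _] _]; rewrite inE.
by rewrite card_imset; [apply: card_setE | apply: set1_inj].
Qed.

Lemma s12E P : goodP P -> (s1 P + 2 * s2 P)%N = M.
Proof.
move=> gP; have partP : partition P [set: 'I_M] by move: (gP) => /andP[].
move: (gP) => /andP[_ /forallP b12].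
suff -> : (s1 P + 2 * s2 P)%N = \sum_(A in P) #|A|.
  by rewrite -(card_partition partP) cardsT card_ord.
rewrite (bigID (fun B : {set 'I_M} => #|B| == 1%N)) /=; congr addn.
  rewrite /s1 -sum1_card; apply: eq_big => [B|B].
  by rewrite inE.
  by rewrite inE => /andP[_ /eqP].
rewrite /s2 mulnC -sum_nat_const; apply: eq_big => [B|B].
  rewrite inE; case BP: (B \in P) => //=; have := b12 B; rewrite BP /=.
  by case/orP=> /eqP ->.
rewrite inE => /andP[BP /eqP -> //].
Qed.

Definition admn ns (s : nat -> nat) :=
  forall i, i < M -> s i != i -> ~~ same_interval ns i (s i).
Definition ncrn (s : nat -> nat) :=
  forall i j, i < j -> j < s i -> s i < s j -> s j < M -> False.
Definition nsin (s : nat -> nat) :=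
  forall x a, a < x -> x < s a -> s a < M -> s x = x -> False.

Definition V ns P := NC12 ns P && (si P == 0%N).

Lemma V_iff ns P :
  V ns P <-> [/\ goodP P, admn ns (pf P), ncrn (pf P) & nsin (pf P)].
Proof.
rewrite /V /NC12 /admissible.
split.
  case/andP=> /and3P[/andP[partP FA] ncP b12] si0.
  have gP : goodP P by apply/andP; split.
  have tiP : trivIset P by case/and3P: partP.
  have cov : forall z : 'I_M, z \in cover P.
    by move=> z; case/and3P: partP => /eqP -> _ _; rewrite inE.
  split => //.
  - move=> i hi ne; pose I := Ordinal hi; pose J := Ordinal (pf_lt gP hi).
    move/forallP: FA => /(_ (pblock P I)); rewrite pblock_mem // => /forallP /(_ I).
    rewrite mem_pblock cov => /forallP /(_ J); rewrite pblockE // eqxx orbT /=.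
    move/implyP; apply; apply/eqP => /(congr1 val) /= h.
    by rewrite -h eqxx in ne.
  - move=> i j ij jk kl lM.
    have kM : pf P i < M by apply: ltn_trans lM.
    have jM : j < M by apply: ltn_trans kM.
    have iM : i < M by apply: ltn_trans jM.
    move/negP: ncP; apply; apply/existsP; exists (Ordinal iM).
    apply/existsP; exists (Ordinal jM); apply/existsP; exists (Ordinal kM).
    apply/existsP; exists (Ordinal lM).
    rewrite /= ij jk kl !prelE //= !eqxx !orbT /=.
    rewrite -val_eqE /= negb_or; apply/andP; split.
      by rewrite neq_ltn ij orbT.
    by rewrite neq_ltn jk.
  - move=> x a ax xb bM fx.
    have xM : x < M by apply: ltn_trans bM.
    have aM : a < M by apply: ltn_trans xM.
    pose X := Ordinal xM; pose A := Ordinal aM; pose Bo := Ordinal bM.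
    move/eqP: si0; apply/eqP; rewrite /si cards_eq0; apply/set0Pn.
    exists [set X]; rewrite inE cards1 eqxx /=; apply/andP; split.
      by rewrite -(pblock_fix (x:=X) gP fx); apply: pblock_mem.
    apply/existsP; exists (pblock P A); rewrite pblock_mem //=; apply/andP; split.
      apply/eqP => e; have : A \in pblock P A by rewrite mem_pblock.
      by rewrite e inE -val_eqE /= => /eqP h; rewrite h ltnn in ax.
    apply/existsP; exists A; rewrite mem_pblock cov /=.
    apply/existsP; exists Bo; rewrite pblockE // eqxx orbT /=.
    by apply/forallP => y; apply/implyP; rewrite inE => /eqP ->; rewrite /= ax xb.
case=> gP adm ncr nsi.
move: (gP) => /andP[partP b12].
have tiP : trivIset P by case/and3P: partP.
have cov : forall z : 'I_M, z \in cover P.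
  by move=> z; case/and3P: partP => /eqP -> _ _; rewrite inE.
move: b12; rewrite /blocks12 => b12.
rewrite partP b12 /= andbT -andbA; apply/and3P; split.
- apply/forallP => B; apply/implyP => BP; apply/forallP => i; apply/implyP => iB.
  apply/forallP => j; apply/implyP => jB; apply/implyP => ij.
  have : j \in pblock P i by rewrite (def_pblock tiP BP iB).
  rewrite pblockE // eq_sym (negPf ij) /= => /eqP hj.
  rewrite hj; apply: adm => //; rewrite -hj.
  by rewrite val_eqE eq_sym.
- apply/negP => /existsP[i /existsP[j /existsP[k /existsP[l]]]].
  case/and5P=> /andP[ij jk] kl pik pjl _.
  have ik := ltn_trans ij jk; have jl := ltn_trans jk kl.
  move: pik pjl; rewrite !prelE // -!val_eqE (gtn_eqF ik) (gtn_eqF jl) /= => /eqP ki /eqP lj.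
  by apply: (ncr i j ij); rewrite -?ki -?lj.
- rewrite /si cards_eq0; apply/eqP/setP => B; rewrite !inE.
  apply/negP => /and3P[BP /cards1P[x Bx] /existsP[C /and3P[CP _ /existsP[a /andP[aC /existsP[b /andP[bC /forallP hab]]]]]]].
  have := hab x; rewrite Bx inE eqxx /= => /andP[ax xb].
  have fx : pf P x = x by apply: fix_of_set1 => //; rewrite -Bx.
  have : b \in pblock P a by rewrite (def_pblock tiP CP aC).
  rewrite pblockE // -val_eqE (gtn_eqF (ltn_trans ax xb)) /= => /eqP hb.
  by apply: (nsi x a ax); rewrite -?hb.
Qed.

End Gen.

Definition swapn (p M : nat) (s : nat -> nat) (i : nat) :=
  if i == p then M else if i == M then p else s i.

Section NatSteps.
Variables (ns : seq nat) (k : nat).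
Let N := sumn ns.
Let M := (N + k)%N.
Let sA := same_interval (rcons ns k).
Let sB := same_interval (rcons ns k.+1).

Lemma sBA i j : i < M -> j < M -> sB i j = sA i j.
Proof.
move=> hi hj; rewrite /sB /sA !SI //; first by rewrite /M in hi; lia.
by rewrite /M in hj; lia.
Qed.

Lemma sB_far p : p < N -> sB p M = false /\ sB M p = false.
Proof.
move=> hp; rewrite /sB !SI; try (rewrite /M /N in hp *; lia).
rewrite /M /N in hp *.
have -> : (sumn ns + k < sumn ns) = false by lia.
rewrite andbF andFb /=; split; apply/negbTE; lia.
Qed.

Lemma sB_near p : N <= p -> p < M.+1 -> sB M p = true.
Proof.
move=> h1 h2; rewrite /sB SI; try (rewrite /M /N in h1 h2 *; lia).
rewrite /M /N in h1 h2 *.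
have -> : (sumn ns + k < sumn ns) = false by lia.
rewrite andFb /=; apply/andP; split; lia.
Qed.

Lemma NL1 s : invn M.+1 s -> admn M.+1 (rcons ns k.+1) s -> ncrn M.+1 s -> nsin M.+1 s ->
  s M = M -> [/\ invn M s, admn M (rcons ns k) s, ncrn M s & nsin M s].
Proof.
move=> hinv hadm hncr hnsi sM.
have inv' : invn M s.
  move=> i hi; have [l1 l2] := hinv i (ltnW hi); split => //.
  rewrite ltn_neqAle -ltnS l1 andbT; apply/eqP => e.
  by move: l2; rewrite e sM => h; rewrite h ltnn in hi.
split => //.
- move=> i hi ne; have [l1 _] := inv' i hi.
  by rewrite -/sA -sBA //; apply: hadm => //; apply: ltnW.
- by move=> i j h1 h2 h3 h4; apply: (hncr i j) => //; apply: ltnW.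
- by move=> x a h1 h2 h3 h4; apply: (hnsi x a) => //; apply: ltnW.
Qed.

Lemma NL2 g : invn M g -> admn M (rcons ns k) g -> ncrn M g -> nsin M g -> g M = M ->
  [/\ invn M.+1 g, admn M.+1 (rcons ns k.+1) g, ncrn M.+1 g & nsin M.+1 g].
Proof.
move=> hinv hadm hncr hnsi gM.
have small : forall i, i < M.+1 -> g i != i -> i < M.
  by move=> i; rewrite ltnS leq_eqVlt => /orP[/eqP ->|//]; rewrite gM eqxx.
split.
- move=> i; rewrite ltnS leq_eqVlt => /orP[/eqP ->|hi]; first by rewrite !gM.
  by have [l1 l2] := hinv i hi; split => //; apply: ltnW.
- move=> i hi ne; have hi' := small i hi ne; have [l1 _] := hinv i hi'.
  by rewrite -/sB sBA //; apply: hadm.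
- move=> i j h1 h2 h3 h4.
  have jM : j < M by rewrite ltnS in h4; apply: leq_trans h4; apply: ltn_trans h3.
  have [l1 l2] := hinv j jM; exact: (hncr i j h1 h2 h3 l1).
- move=> x a h1 h2 h3 h4.
  have aM : a < M by apply: (leq_trans h1); apply: (leq_trans (ltnW h2)); rewrite -ltnS.
  have [l1 l2] := hinv a aM; exact: (hnsi x a h1 h2 l1 h4).
Qed.


Definition restrn (s : nat -> nat) (i : nat) := if s i < M then s i else i.

Lemma NR1 s : invn M.+1 s -> admn M.+1 (rcons ns k.+1) s -> ncrn M.+1 s -> nsin M.+1 s ->
  s M != M ->
  [/\ s M < N, restrn s (s M) = s M, (forall x, s M < x -> x < M -> restrn s x != x),
      (forall i, i < M -> i != s M -> restrn s i = s i) &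
      [/\ invn M (restrn s), admn M (rcons ns k) (restrn s), ncrn M (restrn s)
        & nsin M (restrn s)]].
Proof.
move=> hinv hadm hncr hnsi ne.
have [pM1 spp] := hinv M (ltnSn M).
set p := s M in ne pM1 spp *.
have pM : p < M by rewrite ltn_neqAle ne -ltnS.
have pN : p < N.
  have := hadm M (ltnSn M) ne; rewrite -/sB -/p.
  case: (ltnP p N) => // h; by rewrite sB_near.
have rp : restrn s p = p by rewrite /restrn spp ltnn.
have rE : forall i, i < M -> i != p -> restrn s i = s i.
  move=> i hi ip; have [l1 l2] := hinv i (ltnW hi); rewrite /restrn.
  have -> : s i < M = true; last by [].
  rewrite ltn_neqAle -ltnS l1 andbT; apply/eqP => e; move: ip; rewrite /p -e l2.
  by rewrite eqxx.
have sfix : forall i, i < M -> restrn s i != i -> i != p /\ restrn s i = s i.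
  by move=> i hi; case: (eqVneq i p) => [->|ip]; [rewrite rp eqxx|split => //; apply: rE].
have nofix : forall x, p < x -> x < M -> restrn s x != x.
  move=> x h1 h2; apply/eqP => e.
  have xp : x != p by rewrite neq_ltn h1 orbT.
  by apply: (hnsi x p h1); rewrite ?spp // -(rE x h2 xp).
split => //.
split.
- move=> i hi; case: (eqVneq i p) => [->|ip]; first by rewrite !rp.
  rewrite rE //; have [l1 l2] := hinv i (ltnW hi).
  have sip : s i != p.
    apply/eqP => e; have h : i = M by rewrite -l2 e spp.
    by rewrite h ltnn in hi.
  have siM : s i < M.
    by rewrite ltn_neqAle -ltnS l1 andbT; apply/eqP => e; move: ip; rewrite /p -e l2 eqxx.
  by rewrite rE.
- move=> i hi nei; have [ip ei] := sfix i hi nei; rewrite ei in nei *.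
  have siM : s i < M by rewrite -(rE i hi ip) /restrn; case: ifP.
  by rewrite -/sA -sBA //; apply: hadm => //; apply: ltnW.
- move=> i j h1 h2 h3 h4.
  have jM : j < M by apply: (ltn_trans h2); apply: (ltn_trans h3).
  have iM : i < M by apply: ltn_trans h1 jM.
  have ne_i : restrn s i != i by apply/eqP => e; rewrite e in h2; lia.
  have ne_j : restrn s j != j by apply/eqP => e; rewrite e in h3; lia.
  have [ip ei] := sfix i iM ne_i; have [jp ej] := sfix j jM ne_j.
  rewrite ei ej in h2 h3 h4.
  by apply: (hncr i j h1 h2 h3); apply: ltnW.
- move=> x a h1 h2 h3 h4.
  have xM : x < M by apply: ltn_trans h3.
  have aM : a < M by apply: ltn_trans h1 xM.
  have ne_a : restrn s a != a by apply/eqP => e; rewrite e in h2; lia.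
  have [ap ea] := sfix a aM ne_a; rewrite ea in h2 h3.
  case: (eqVneq x p) => [xp|xp].
    by rewrite xp in h1 h2; apply: (hncr a p h1 h2); rewrite spp.
  by apply: (hnsi x a h1 h2); [apply: ltnW | rewrite -(rE x xM xp)].
Qed.


Lemma NR2 g p : invn M g -> admn M (rcons ns k) g -> ncrn M g -> nsin M g ->
  p < N -> g p = p -> (forall x, p < x -> x < M -> g x != x) ->
  [/\ invn M.+1 (swapn p M g), admn M.+1 (rcons ns k.+1) (swapn p M g),
      ncrn M.+1 (swapn p M g), nsin M.+1 (swapn p M g) &
      (forall i, i < M -> restrn (swapn p M g) i = g i)].
Proof.
move=> hinv hadm hncr hnsi pN gp hfix.
have pM : p < M by apply: (leq_trans pN); rewrite /M leq_addr.
have pnM : (p == M) = false by apply/negbTE; rewrite neq_ltn pM.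
have sp : swapn p M g p = M by rewrite /swapn eqxx.
have sM : swapn p M g M = p by rewrite /swapn eq_sym pnM eqxx.
have sE : forall i, i != p -> i != M -> swapn p M g i = g i.
  by move=> i h1 h2; rewrite /swapn (negbTE h1) (negbTE h2).
have gI : forall i, i < M -> i != p -> [/\ g i < M, g i != p, g i != M & g (g i) = i].
  move=> i hi ip; have [l1 l2] := hinv i hi; split => //.
  - by apply/eqP => e; move: ip; rewrite -l2 e gp eqxx.
  - by rewrite neq_ltn l1.
have sgE : forall i, i < M -> i != p -> swapn p M g i = g i.
  by move=> i hi ip; apply: sE => //; rewrite neq_ltn hi.
split.
- move=> i; rewrite ltnS leq_eqVlt => /orP[/eqP ->|hi].
    by rewrite sM sp; split => //; apply: ltnW.
  case: (eqVneq i p) => [->|ip]; first by rewrite sp sM.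
  have [l1 l2 l3 l4] := gI i hi ip.
  by rewrite sgE // sgE // l4; split => //; apply: ltnW.
- move=> i; rewrite ltnS leq_eqVlt => /orP[/eqP ->|hi] ne.
    by rewrite sM -/sB; case: (sB_far pN) => _ ->.
  case: (eqVneq i p) => [->|ip]; first by rewrite sp -/sB; case: (sB_far pN) => -> _.
  have [l1 _ _ _] := gI i hi ip; rewrite sgE // in ne *.
  by rewrite -/sB sBA //; apply: hadm.
- move=> i j h1 h2 h3 h4.
  have jM : j < M.
    have jM1 : j < M.+1 by lia.
    rewrite ltn_neqAle -ltnS jM1 andbT.
    apply/eqP => e; rewrite e sM in h2 h3; lia.
  have iM : i < M by apply: ltn_trans h1 jM.
  case: (eqVneq i p) => [ip|ip].
    by rewrite ip sp in h3; lia.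
  case: (eqVneq j p) => [jp|jp].
    rewrite jp in h1 h2; rewrite sgE // in h2 h3.
    by apply: (hnsi p i h1 h2); [have [] := gI i iM ip|].
  rewrite !sgE // in h2 h3 h4.
  have [l1 _ _ _] := gI j jM jp.
  exact: (hncr i j h1 h2 h3 l1).
- move=> x a h1 h2 h3 h4.
  have xp : x != p by apply/eqP => e; rewrite e sp in h4; lia.
  have xM : x != M by apply/eqP => e; rewrite e sM in h4; lia.
  have xM' : x < M by rewrite ltn_neqAle xM -ltnS (ltn_trans h2 h3).
  rewrite sE // in h4.
  have aM : a < M by apply: ltn_trans h1 xM'.
  case: (eqVneq a p) => [ap|ap].
    by have := hfix x; rewrite -ap h1 xM' h4 eqxx => /(_ isT isT).
  rewrite sgE // in h2 h3.
  have [l1 _ _ _] := gI a aM ap.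
  exact: (hnsi x a h1 h2 l1 h4).
- move=> i hi; rewrite /restrn.
  case: (eqVneq i p) => [->|ip]; first by rewrite sp ltnn gp.
  by have [l1 _ _ _] := gI i hi ip; rewrite sgE // l1.
Qed.

Lemma NC s : invn M.+1 s -> admn M.+1 (rcons ns k.+1) s -> ncrn M.+1 s -> nsin M.+1 s ->
  (s M == M) = [exists x : 'I_M.+1, (N <= x) && (s x == x)].
Proof.
move=> hinv hadm hncr hnsi.
apply/idP/existsP => [/eqP sM|[x /andP[h1 /eqP h2]]].
  by exists ord_max => /=; rewrite sM eqxx /M leq_addr.
apply/negPn/negP => ne.
have [pN _ nof rE _] := NR1 hinv hadm hncr hnsi ne.
have xM : x < M.+1 := ltn_ord x.
rewrite ltnS leq_eqVlt in xM; case/orP: xM => [/eqP xM|xM].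
  by rewrite -xM h2 eqxx in ne.
have := nof x (leq_trans pN h1) xM.
rewrite rE //; first by rewrite h2 eqxx.
by rewrite neq_ltn (leq_trans pN h1) orbT.
Qed.

End NatSteps.

Definition lf M (g : nat -> nat) := (\max_(i < M | g i == i) i)%N.

Lemma lf_eq M g p : p < M -> g p = p -> (forall x, p < x -> x < M -> g x != x) -> lf M g = p.
Proof.
move=> pM gp h; apply/eqP; rewrite eqn_leq; apply/andP; split.
  apply/bigop.bigmax_leqP => i /eqP gi; rewrite leqNgt; apply/negP => pi.
  by have := h i pi (ltn_ord i); rewrite gi eqxx.
by rewrite /lf; apply: (bigop.bigmax_sup (Ordinal pM)) => //=; rewrite gp.
Qed.

Lemma fixc_pos M g : 0 < fixc M g -> exists i : 'I_M, g i == i.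
Proof.
case: (pickP (fun i : 'I_M => g i == i)) => [i hi|none]; first by exists i.
by rewrite /fixc big1 // => i _; rewrite none.
Qed.

Lemma lf_spec M g : 0 < fixc M g ->
  [/\ lf M g < M, g (lf M g) = lf M g & forall x, lf M g < x -> x < M -> g x != x].
Proof.
move=> /fixc_pos [i0 hi0].
have : (0 < #|(fun i : 'I_M => g i == i)|)%N by apply/card_gt0P; exists i0.
case/(bigop.eq_bigmax_cond (fun i : 'I_M => val i)) => j hj e.
have e' : lf M g = j by rewrite /lf -e; apply: eq_bigl => i; rewrite unfold_in.
have le : forall x : 'I_M, g x == x -> x <= lf M g.
  by move=> x hx; rewrite /lf; apply: (bigop.bigmax_sup x).
rewrite e'; split => //; first by move: hj; rewrite unfold_in => /eqP.
move=> x h1 h2; apply/negP => /eqP gx.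
have := le (Ordinal h2) (introT eqP gx); rewrite e' /=.
by rewrite leqNgt h1.
Qed.

Lemma fixc_ext M s s' : (forall i, i < M -> s i = s' i) -> fixc M s = fixc M s'.
Proof. by move=> h; apply: eq_bigr => i _; rewrite h. Qed.

Lemma fixc_S M s : fixc M.+1 s = (fixc M s + (s M == M))%N.
Proof. by rewrite /fixc big_ord_recr. Qed.

Lemma fixc_swap M g p : p < M -> g p = p ->
  (fixc M.+1 (swapn p M g)).+1 = fixc M g.
Proof.
move=> pM gp; rewrite fixc_S /swapn eqxx (gtn_eqF pM) /= (ltn_eqF pM) addn0.
rewrite /fixc (bigD1 (Ordinal pM)) //= [in RHS](bigD1 (Ordinal pM)) //= eqxx gp eqxx.
rewrite (gtn_eqF pM) add0n add1n; congr S.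
apply: eq_bigr => i ip.
have ip' : (val i == p) = false by apply/negbTE; rewrite -val_eqE in ip.
by rewrite ip' (ltn_eqF (ltn_ord i)).
Qed.

Definition VN ns M s := [/\ invn M s, admn M ns s, ncrn M s & nsin M s].

Lemma VN_ext ns M s s' : (forall i, i < M -> s i = s' i) -> VN ns M s -> VN ns M s'.
Proof.
move=> h [hinv hadm hncr hnsi]; split.
- move=> i hi; have [l1 l2] := hinv i hi.
  by rewrite -(h i hi) -(h _ l1) l2.
- by move=> i hi; rewrite -(h i hi); apply: hadm.
- move=> i j h1 h2 h3 h4.
  have jM : j < M by lia.
  have iM : i < M by lia.
  have kM : s' i < M by lia.
  rewrite -(h i iM) -(h j jM) in h2 h3 h4; exact: (hncr i j h1 h2 h3 h4).
- move=> x a h1 h2 h3 h4.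
  have xM : x < M by lia.
  have aM : a < M by lia.
  rewrite -(h a aM) -(h x xM) in h2 h3 h4; exact: (hnsi x a h1 h2 h3 h4).
Qed.

Lemma V_VN ns M (P : {set {set 'I_M}}) : V ns P <-> goodP P /\ VN ns M (pf P).
Proof.
rewrite V_iff; split => [[gP a b c]|[gP [_ a b c]]]; last by split.
by split => //; split => //; apply: pf_inv.
Qed.

Lemma V_mkP ns M s : VN ns M s -> V ns (mkP M s).
Proof.
move=> hV; have hinv : invn M s by case: hV.
apply/V_VN; split; first exact: goodP_mkP.
apply: (VN_ext _ hV) => i hi; by rewrite pf_mkP.
Qed.

Lemma fixc_pos' M s p : p < M -> s p = p -> 0 < fixc M s.
Proof.
move=> pM sp; rewrite /fixc (bigD1 (Ordinal pM)) //= sp eqxx.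
by rewrite add1n.
Qed.

Lemma s1_mkP M s : invn M s -> s1 (mkP M s) = fixc M s.
Proof.
move=> hinv; rewrite s1E; last exact: goodP_mkP.
by apply: fixc_ext => i hi; rewrite pf_mkP.
Qed.

Definition nofixP N M (P : {set {set 'I_M}}) := [forall x : 'I_M, (N <= x) ==> (pf P x != x)].

Section Bij.
Variables (ns : seq nat) (k : nat).
Let N := sumn ns.
Let M := (N + k)%N.

Definition hL (g : {set {set 'I_M}}) : {set {set 'I_M.+1}} := mkP M.+1 (pf g).
Definition hR (g : {set {set 'I_M}}) : {set {set 'I_M.+1}} :=
  mkP M.+1 (swapn (lf M (pf g)) M (pf g)).
Definition hB (P : {set {set 'I_M.+1}}) : {set {set 'I_M}} := mkP M (restrn ns k (pf P)).

Lemma L1 P : V (rcons ns k.+1) P -> pf P M = M ->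
  [/\ V (rcons ns k) (hB P), hL (hB P) = P & s1 P = (s1 (hB P)).+1].
Proof.
move=> /V_VN [gP [hinv hadm hncr hnsi]] hM.
have [inv' adm' ncr' nsi'] := NL1 hinv hadm hncr hnsi hM.
have agr : forall i, i < M -> restrn ns k (pf P) i = pf P i.
  by move=> i hi; rewrite /restrn; have [-> _] := inv' i hi.
have VNr : VN (rcons ns k) M (restrn ns k (pf P)).
  by apply: (VN_ext (s := pf P)) => [i hi|]; [rewrite agr | split].
have [invr _ _ _] := VNr.
have agr2 : forall i, i < M.+1 -> pf (hB P) i = pf P i.
  move=> i; rewrite ltnS leq_eqVlt => /orP[/eqP ->|hi]; first by rewrite pf_ge ?hM.
  by rewrite /hB pf_mkP // agr.
split.
- exact: V_mkP.
- by rewrite /hL (mkP_ext agr2) mkP_pf.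
- rewrite (s1E gP) /hB s1_mkP // fixc_S hM eqxx addn1; congr S.
  by apply: fixc_ext => i hi; rewrite agr.
Qed.

Lemma L2 g : V (rcons ns k) g ->
  [/\ V (rcons ns k.+1) (hL g), pf (hL g) M = M, hB (hL g) = g & s1 (hL g) = (s1 g).+1].
Proof.
move=> /V_VN [gP [hinv hadm hncr hnsi]].
have gM : pf g M = M by rewrite pf_ge.
have [inv2 adm2 ncr2 nsi2] := NL2 hinv hadm hncr hnsi gM.
have agr : forall i, i < M.+1 -> pf (hL g) i = pf g i by move=> i hi; rewrite pf_mkP.
split.
- apply/V_VN; split; first exact: goodP_mkP.
  by apply: (VN_ext (s := pf g)) => [i hi|]; [rewrite agr | split].
- by rewrite agr.
- rewrite /hB -{2}(mkP_pf gP); apply: mkP_ext => i hi.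
  rewrite /restrn (agr i (ltnW hi)); by have [-> _] := hinv i hi.
- by rewrite /hL (s1_mkP inv2) (s1E gP) fixc_S gM eqxx addn1.
Qed.


Lemma R1 P : V (rcons ns k.+1) P -> pf P M != M ->
  [/\ V (rcons ns k) (hB P), nofixP N (hB P), 0 < s1 (hB P), hR (hB P) = P
    & s1 (hB P) = (s1 P).+1].
Proof.
move=> /V_VN [gP [hinv hadm hncr hnsi]] ne.
have [pN rp nof rE [inv' adm' ncr' nsi']] := NR1 hinv hadm hncr hnsi ne.
have [_ spp] := hinv M (ltnSn M).
set p := pf P M in ne pN rp nof rE spp.
have pM : p < M by apply: (leq_trans pN); rewrite /M leq_addr.
have agr : forall i, i < M -> pf (hB P) i = restrn ns k (pf P) i.
  by move=> i hi; rewrite /hB pf_mkP.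
have VNr : VN (rcons ns k) M (restrn ns k (pf P)) by split.
have lfp : lf M (pf (hB P)) = p.
  apply: lf_eq => //; first by rewrite agr.
  by move=> x h1 h2; rewrite agr //; apply: nof.
split.
- exact: V_mkP.
- apply/forallP => x; apply/implyP => Nx; rewrite agr //.
  by apply: nof => //; apply: leq_trans pN Nx.
- by rewrite /hB (s1_mkP inv'); apply: (fixc_pos' pM).
- rewrite /hR lfp -{2}(mkP_pf gP); apply: mkP_ext => i.
  rewrite ltnS leq_eqVlt => /orP[/eqP ->|hi]; first by rewrite /swapn eqxx (gtn_eqF pM).
  rewrite /swapn; case: (eqVneq i p) => [->|ip]; first by rewrite spp.
  by rewrite (ltn_eqF hi) agr // rE.
- rewrite (s1E gP) /hB (s1_mkP inv').
  rewrite -(fixc_swap (g := restrn ns k (pf P)) pM rp); congr S.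
  apply: fixc_ext => i; rewrite ltnS leq_eqVlt => /orP[/eqP ->|hi].
    by rewrite /swapn eqxx (gtn_eqF pM).
  rewrite /swapn; case: (eqVneq i p) => [->|ip]; first by rewrite spp.
  by rewrite (ltn_eqF hi) rE.
Qed.

Lemma R2 g : V (rcons ns k) g -> nofixP N g -> 0 < s1 g ->
  [/\ V (rcons ns k.+1) (hR g), pf (hR g) M != M, hB (hR g) = g & (s1 (hR g)).+1 = s1 g].
Proof.
move=> /V_VN [gP [hinv hadm hncr hnsi]] nf pos.
rewrite (s1E gP) in pos *.
have [lM lfx lno] := lf_spec pos.
set p := lf M (pf g) in lM lfx lno.
have pN : p < N.
  by move/forallP: nf => /(_ (Ordinal lM)); rewrite /= lfx eqxx implybF -ltnNge.
have [inv2 adm2 ncr2 nsi2 agr] := NR2 hinv hadm hncr hnsi pN lfx lno.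
have agrR : forall i, i < M.+1 -> pf (hR g) i = swapn p M (pf g) i.
  by move=> i hi; rewrite /hR pf_mkP.
split.
- exact: V_mkP.
- by rewrite agrR // /swapn (gtn_eqF lM) eqxx (ltn_eqF lM).
- rewrite /hB -{2}(mkP_pf gP); apply: mkP_ext => i hi.
  by rewrite -agr // /restrn agrR // ltnW.
- by rewrite /hR (s1_mkP inv2) fixc_swap.
Qed.


Lemma classify (P : {set {set 'I_M.+1}}) : V (rcons ns k.+1) P -> nofixP N P = (pf P M != M).
Proof.
move=> /V_VN [gP [hinv hadm hncr hnsi]].
rewrite (NC hinv hadm hncr hnsi) /nofixP negb_exists; apply: eq_forallb => x.
by rewrite negb_and -implybE.
Qed.

Variable T : nmodType.

Lemma SL (G : {set {set 'I_M.+1}} -> T) :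
  (\sum_(P | V (rcons ns k.+1) P && (pf P M == M)) G P =
  \sum_(g | V (rcons ns k) g) G (hL g))%R.
Proof.
rewrite (reindex_onto hL hB); last by move=> P /andP[hv /eqP hM]; case: (L1 hv hM).
apply: eq_bigl => g; apply/idP/idP.
  case/andP=> /andP[hv /eqP hM] /eqP e; have [V' _ _] := L1 hv hM; by rewrite -e.
by move=> hv; have [V' -> -> _] := L2 hv; rewrite V' !eqxx.
Qed.

Lemma SR (G : {set {set 'I_M.+1}} -> T) :
  (\sum_(P | V (rcons ns k.+1) P && (pf P M != M)) G P =
  \sum_(g | [&& V (rcons ns k) g, nofixP N g & (0 < s1 g)%N]) G (hR g))%R.
Proof.
rewrite (reindex_onto hR hB); last by move=> P /andP[hv hM]; case: (R1 hv hM).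
apply: eq_bigl => g; apply/idP/idP.
  case/andP=> /andP[hv hM] /eqP e; have [V' nf pos _ _] := R1 hv hM; by rewrite -e V' nf pos.
by case/and3P=> hv nf pos; have [V' -> -> _] := R2 hv nf pos; rewrite V' !eqxx.
Qed.

Definition WF M' ns' (F : nat -> nat -> T) : T :=
  (\sum_(P : {set {set 'I_M'}} | V ns' P) F (s1 P) (s2 P))%R.

Lemma goodV ns' M' (P : {set {set 'I_M'}}) : V ns' P -> goodP P.
Proof. by case/V_VN. Qed.

Lemma C1 (F : nat -> nat -> T) : (WF M.+1 (rcons ns k.+1) F =
  WF M (rcons ns k) (fun s e => F s.+1 e) +
  \sum_(g : {set {set 'I_M}} | [&& V (rcons ns k) g, nofixP N g & (0 < s1 g)%N]) F (s1 g).-1 (s2 g).+1)%R.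
Proof.
rewrite /WF (bigID (fun P => pf P M == M)) /= SL SR; congr (_ + _)%R.
  apply: eq_bigr => g hv; have [V' _ _ e] := L2 hv.
  have := s12E (goodV hv); have := s12E (goodV V'); rewrite e => h1 h2.
  by congr F; lia.
apply: eq_bigr => g /and3P[hv nf pos]; have [V' _ _ e] := R2 hv nf pos.
have := s12E (goodV hv); have := s12E (goodV V'); rewrite -e => h1 h2.
by congr F; lia.
Qed.

Lemma C2 (F : nat -> nat -> T) :
  (\sum_(P : {set {set 'I_M.+1}} | V (rcons ns k.+1) P && ~~ nofixP N P) F (s1 P) (s2 P))%R =
  WF M (rcons ns k) (fun s e => F s.+1 e).
Proof.
rewrite (eq_bigl (fun P => V (rcons ns k.+1) P && (pf P M == M))).
  rewrite SL; apply: eq_bigr => g hv; have [V' _ _ e] := L2 hv.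
  have := s12E (goodV hv); have := s12E (goodV V'); rewrite e => h1 h2.
  by congr F; lia.
move=> P; case hv: (V _ P) => //=; by rewrite classify // negbK.
Qed.

Lemma C3 (F : nat -> nat -> T) :
  (\sum_(P : {set {set 'I_M.+1}} | V (rcons ns k.+1) P && nofixP N P) F (s1 P) (s2 P) =
  \sum_(g : {set {set 'I_M}} | [&& V (rcons ns k) g, nofixP N g & (0 < s1 g)%N]) F (s1 g).-1 (s2 g).+1)%R.
Proof.
rewrite (eq_bigl (fun P => V (rcons ns k.+1) P && (pf P M != M))).
  rewrite SR; apply: eq_bigr => g /and3P[hv nf pos]; have [V' _ _ e] := R2 hv nf pos.
  have := s12E (goodV hv); have := s12E (goodV V'); rewrite -e => h1 h2.
  by congr F; lia.
move=> P; case hv: (V _ P) => //=; by rewrite classify.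
Qed.

End Bij.

Lemma SIeq ns i j : i < sumn ns -> j < sumn ns ->
  same_interval (rcons ns 0) i j = same_interval ns i j.
Proof. by move=> hi hj; rewrite SI ?addn0 // hi hj. Qed.

Lemma V0 ns (P : {set {set 'I_(sumn ns)}}) : V (rcons ns 0) P = V ns P.
Proof.
apply/idP/idP => /V_VN [gP [hinv hadm hncr hnsi]]; apply/V_VN; split => //; split => //.
  by move=> i hi ne; have [l1 _] := hinv i hi; rewrite -SIeq //; apply: hadm.
by move=> i hi ne; have [l1 _] := hinv i hi; rewrite SIeq //; apply: hadm.
Qed.

Lemma nofix0 N (P : {set {set 'I_(N + 0)}}) : nofixP N P.
Proof.
apply/forallP => x; apply/implyP => h; exfalso; have := ltn_ord x; lia.
Qed.

Lemma notnofix_pos N M (P : {set {set 'I_M}}) : goodP P -> ~~ nofixP N P -> (0 < s1 P)%N.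
Proof.
move=> gP; rewrite negb_forall => /existsP[x]; rewrite negb_imply => /andP[_ /negbNE /eqP h].
by rewrite (s1E gP); apply: (fixc_pos' (ltn_ord x)).
Qed.

Section Count.
Variable (R : nmodType).
Variable ns : seq nat.
Let N := sumn ns.

Lemma GB k (F : nat -> nat -> R) :
  (\sum_(P : {set {set 'I_(N + k)}} | V (rcons ns k) P && nofixP N P) F (s1 P) (s2 P) =
   \sum_(g : {set {set 'I_(N + 0)}} | V (rcons ns 0) g && (k <= s1 g)%N)
      F (s1 g - k)%N (s2 g + k)%N)%R.
Proof.
elim: k F => [|k IH] F.
  apply: eq_big => [P|P _]; first by rewrite nofix0.
  by rewrite subn0 (addn0 (s2 P)).
rewrite addnS C3.
rewrite (eq_bigl (fun g => (V (rcons ns k) g && nofixP N g) && (0 < s1 g)%N)); last first.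
  by move=> g; rewrite andbA.
rewrite big_mkcondr /=.
rewrite (IH (fun s e => if (0 < s)%N then F s.-1 e.+1 else 0%R)).
rewrite big_mkcondr [RHS]big_mkcondr; apply: eq_bigr => g _.
case: (ltngtP k (s1 g)) => h.
- by rewrite subn_gt0 h; congr F; lia.
- by [].
- by rewrite h subnn ltnn.
Qed.

End Count.

Section Poly.
Variable R : comNzRingType.
Variable t : R.
Variable ns : seq nat.
Let N := sumn ns.
Local Open Scope ring_scope.

Definition Fw (s e : nat) : {poly R} := t ^+ e *: Ucheb t s.
Definition A k := WF (N + k) (rcons ns k) Fw.
Definition D k := \sum_(g : {set {set 'I_(N + k)}} | V (rcons ns k) g && ~~ nofixP N g)
   Fw (s1 g).-1 (s2 g).+1.

Lemma Ustep s : Ucheb t s.+1 = 'X * Ucheb t s - (if s is s'.+1 then t *: Ucheb t s' else 0).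
Proof.
case: s => [|s]; first by rewrite /Ucheb /= mulr1 subr0.
by rewrite /Ucheb /= mul_polyC.
Qed.

Lemma Fw_step s e : Fw s.+1 e = 'X * Fw s e - (if (0 < s)%N then Fw s.-1 e.+1 else 0).
Proof.
rewrite /Fw Ustep scalerBr scalerAr; congr (_ - _).
by case: s => [|s] /=; rewrite ?scaler0 // scalerA exprSr.
Qed.

Lemma A_step k : A k.+1 = 'X * A k - D k.
Proof.
rewrite /A addnS C1 /WF.
rewrite (eq_bigr (fun P => 'X * Fw (s1 P) (s2 P) - (if (0 < s1 P)%N then Fw (s1 P).-1 (s2 P).+1 else 0))); last by move=> P _; rewrite Fw_step.
rewrite sumrB -mulr_sumr -big_mkcondr /=.
rewrite [X in _ - X](bigID (fun g => nofixP N g)) /= opprD addrA.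
have E : \sum_(i : {set {set 'I_(N + k)}} | V (rcons ns k) i && (0 < s1 i)%N && nofixP N i)
     Fw (s1 i).-1 (s2 i).+1 =
   \sum_(g : {set {set 'I_(N + k)}} | [&& V (rcons ns k) g, nofixP N g & (0 < s1 g)%N])
     Fw (s1 g).-1 (s2 g).+1.
  by apply: eq_bigl => g; rewrite -andbA [X in _ && X]andbC.
rewrite E addrAC subrK; congr (_ - _); apply: eq_bigl => g.
case hv: (V _ g) => //=; case nf: (nofixP N g) => //=; first by rewrite andbF.
by rewrite (notnofix_pos (goodV hv) (negbT nf)).
Qed.

Lemma D_succ k : D k.+1 = t *: A k.
Proof.
rewrite /D addnS (C2 _ _ (fun s e => Fw s.-1 e.+1)) /A /WF scaler_sumr; apply: eq_bigr => P _.
by rewrite /Fw /= scalerA exprS.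
Qed.

Lemma D0 : D 0 = 0.
Proof. by rewrite /D big_pred0 // => g; rewrite nofix0 andbF. Qed.

Lemma A_U k : A k = A 0 * Ucheb t k.
Proof.
suff : A k = A 0 * Ucheb t k /\ A k.+1 = A 0 * Ucheb t k.+1 by case.
elim: k => [|k [IH1 IH2]].
  split; first by rewrite /Ucheb /= mulr1.
  by rewrite A_step D0 subr0 /Ucheb /= mulrC.
split => //; rewrite A_step D_succ IH1 IH2 (Ustep k.+1) /=.
by rewrite mulrBr mulrCA scalerAr.
Qed.

Lemma A0E : A 0 = WF N ns Fw.
Proof. by rewrite /A addn0 /WF; apply: eq_bigl => P; rewrite V0. Qed.

End Poly.

Lemma part1 (R : comNzRingType) (t : R) ns :
  (\prod_(nj <- ns) Ucheb t nj)%R = WF (sumn ns) ns (Fw t).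
Proof.
elim/last_ind: ns => [|ns k IH].
  rewrite big_nil /WF; change (sumn [::]) with 0%N.
  have hinv : invn 0 id by [].
  have hV : VN [::] 0 id by split.
  rewrite (big_pred1 (mkP 0 id)); last first.
    move=> P /=; apply/idP/eqP => [hv|->]; last exact: V_mkP.
    have gP := goodV hv; rewrite -(mkP_pf gP); exact: mkP_ext.
  have e1 : s1 (mkP 0 id) = 0%N by rewrite (s1_mkP hinv) /fixc big_ord0.
  have := s12E (goodP_mkP hinv); rewrite e1 => e2.
  have e3 : s2 (mkP 0 id) = 0%N by lia.
  by rewrite e3 /Fw expr0 scale1r.
rewrite big_rcons /= IH.
have -> : WF (sumn (rcons ns k)) (rcons ns k) (Fw t) = A t ns k by rewrite /A sumn_rcons.
by rewrite A_U A0E.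
Qed.

Lemma NC2_V ns M (P : {set {set 'I_M}}) : NC2 ns P = V ns P && (s1 P == 0%N).
Proof.
rewrite /NC2 /V /NC12.
case: (admissible ns P) => //=; case: (noncrossing P) => //=.
apply/idP/idP.
  move=> /forallP h2.
  have n1 : forall B, B \in P -> #|B| != 1%N.
    by move=> B BP; have := h2 B; rewrite BP /= => /eqP ->.
  rewrite -andbA; apply/and3P; split.
  - by apply/forallP => B; apply/implyP => BP; have := h2 B; rewrite BP /= => ->; rewrite orbT.
  - rewrite /si cards_eq0; apply/eqP/setP => B; rewrite !inE.
    by apply/negP => /and3P[BP hB _]; move: (n1 B BP); rewrite hB.
  - rewrite /s1 cards_eq0; apply/eqP/setP => B; rewrite !inE.
    by apply/negP => /andP[BP hB]; move: (n1 B BP); rewrite hB.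
rewrite -andbA; case/and3P=> /forallP b12 _ hs1; apply/forallP => B; apply/implyP => BP.
have := b12 B; rewrite BP /= => /orP[h1|//].
move: hs1; rewrite /s1 cards_eq0 => /eqP/setP /(_ B); rewrite !inE BP h1.
by [].
Qed.

Lemma cnt (R : nzRingType) ns m :
  ((#|[set P : {set {set 'I_(sumn (ns ++ [:: m]))}} | NC2 (ns ++ [:: m]) P]|)%:R =
  (#|[set P : {set {set 'I_(sumn ns)}} | V ns P && (s1 P == m)]|)%:R :> R)%R.
Proof.
have h : forall (T : finType) (A : {set T}), ((#|A|)%:R = \sum_(i in A) 1 :> R)%R.
  by move=> T A; rewrite sumr_const.
rewrite !h cats1 sumn_rcons.
rewrite (eq_bigl (fun P => (V (rcons ns m) P && nofixP (sumn ns) P) && (s1 P == 0%N)));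
  last first.
  move=> P; rewrite inE NC2_V; case hv: (V _ P) => //=.
  case e: (s1 P == 0%N); rewrite ?andbF //= andbT.
  apply/esym/forallP => x; apply/implyP => _; apply/negP => /eqP fx.
  move/eqP: e; rewrite (s1E (goodV hv)) => e.
  by have := fixc_pos' (ltn_ord x) fx; rewrite e.
rewrite big_mkcondr /=.
rewrite (@GB _ ns m (fun s e => if s == 0%N then 1%R else 0%R)).
rewrite addn0 -big_mkcondr; apply: eq_bigl => g.
rewrite inE V0; case: (V ns g) => //=.
by rewrite subn_eq0 -eqn_leq eq_sym.
Qed.

Lemma part2 (R : rcfType) (t : R) (ht : (0 < t)%R) ns :
  (\prod_(nj <- ns) Ucheb t nj =
    \sum_(0 <= m < (sumn ns).+1)
       (Num.sqrt t ^+ (sumn ns - m)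
        * (#|[set P : {set {set 'I_(sumn (ns ++ [:: m]))}} | NC2 (ns ++ [:: m]) P]|)%:R)
       *: Ucheb t m)%R.
Proof.
rewrite part1 /WF /Fw.
set n := sumn ns.
have sq : forall P : {set {set 'I_n}}, V ns P ->
    (Num.sqrt t ^+ (n - s1 P) = t ^+ s2 P)%R.
  move=> P hv; have := s12E (goodV hv) => e.
  have -> : (n - s1 P = 2 * s2 P)%N by lia.
  by rewrite exprM sqr_sqrtr // ltW.
have step : forall m, ((Num.sqrt t ^+ (n - m) *
        (#|[set P : {set {set 'I_(sumn (ns ++ [:: m]))}} | NC2 (ns ++ [:: m]) P]|)%:R)
       *: Ucheb t m =
    \sum_(P : {set {set 'I_n}} | V ns P) (if s1 P == m then t ^+ s2 P *: Ucheb t m else 0))%R.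
  move=> m; rewrite cnt mulr_natr -scalerMnl -big_mkcondr /=.
  rewrite (eq_bigl (fun P => P \in [set P : {set {set 'I_n}} | V ns P && (s1 P == m)]));
    last by move=> P; rewrite inE.
  rewrite (eq_bigr (fun _ => Num.sqrt t ^+ (n - m) *: Ucheb t m)%R); first by rewrite sumr_const.
  by move=> P; rewrite inE => /andP[hv /eqP <-]; rewrite sq.
rewrite (eq_bigr _ (fun m _ => step m)) exchange_big /=; apply: eq_bigr => P hv.
have := s12E (goodV hv) => e.
have lt : (s1 P < n.+1)%N by lia.
rewrite big_mkord (bigD1 (Ordinal lt)) //= eqxx big1 ?addr0 // => i ne.
case: eqP => // e2; move: ne; rewrite -val_eqE /= -e2 eqxx.
by [].
Qed.


Unset Implicit Arguments.
Local Open Scope ring_scope.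

Theorem mainTheorem9 (R : rcfType) (t : R) (ht : 0 < t) (ns : seq nat) :
  \prod_(nj <- ns) Ucheb t nj =
    \sum_(P : {set {set 'I_(sumn ns)}} | NC12 ns P && (si P == 0%N))
       (t ^+ s2 P) *: Ucheb t (s1 P)
  /\
  \prod_(nj <- ns) Ucheb t nj =
    \sum_(0 <= m < (sumn ns).+1)
       (Num.sqrt t ^+ (sumn ns - m)
        * (#|[set P : {set {set 'I_(sumn (ns ++ [:: m]))}} | NC2 (ns ++ [:: m]) P]|)%:R)
       *: Ucheb t m.
Proof.
split; first exact: (part1 t ns).
exact: (part2 ht ns).
Qed.
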